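(* Let $H$ be a BF-monoid and consider the conditions: \begin{itemize} \item[(a)] There are submonoids $H_1,H_2\subseteq H$ such that $H=H_1\times H_2$ (internal direct product), where $H_1$ is half-factorial but not a group. \item[(b)] For every rational number $q$ with $1<q<\rho(H)$ there is $c\in H$ such that $\rho(\mathsf L(c^k))=\rho(\mathsf L(c))>q$ for all $k\in\mathbb N$. \item[(b')] (With $H_2$ as in (a).) For every $m\in\mathbb N_{\ge 2}$ there is $L\in\mathcal L(H_2)$ with $\min L=2$ and $\max L=m$. \end{itemize} Then: condition (a) holds whenever $H$ has a cancellative prime element $p$ (with $H_1$ the free abelian monoid generated by $p$ and $H_2=\{a\in H: p\nmid a\}$); condition (b) holds whenever $H$ has accepted elasticity. If conditions (a) and (b) hold, or conditions (a) and (b') hold, then $H$ is fully elastic.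
   Context: A monoid means a commutative semigroup $H$ with identity which is unit-cancellative (if $a=au$ then $u\in H^\times$, the group of units). An atom is a non-unit $u$ such that $u=ab$ implies $a$ or $b$ is a unit. For $a\in H$, $\mathsf L(a)\subseteq\mathbb N_0$ is the set of all $\ell$ such that $a=\varepsilon u_1\cdots u_\ell$ with $\varepsilon\in H^\times$ and atoms $u_i$; $\mathcal L(H)=\{\mathsf L(a):a\in H\}$. $H$ is a BF-monoid if every $\mathsf L(a)$ is finite and nonempty, and half-factorial if $|\mathsf L(a)|=1$ for all $a$. For a finite nonempty $L\subseteq\mathbb N$, $\rho(L)=\max L/\min L$, and $\rho(\{0\})=1$; $\rho(H)=\sup\{\rho(L):L\in\mathcal L(H)\}$. $H$ has accepted elasticity if $\rho(L)=\rho(H)$ for some $L\in\mathcal L(H)$. $H$ is fully elastic if for every rational $q$ with $1<q<\rho(H)$ there is $L\in\mathcal L(H)$ with $\rho(L)=q$. An element $p$ is prime if it is a non-unit and $p\mid ab$ implies $p\mid a$ or $p\mid b$; it is cancellative if $pb=pc$ implies $b=c$. *)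

(* Defs.v *)
From HB Require Import structures.
From mathcomp Require Import all_boot all_order all_algebra.
From mathcomp Require Import boolp classical_sets reals constructive_ereal ereal.
Set Implicit Arguments. Unset Strict Implicit. Unset Printing Implicit Defensive.
Import Order.TTheory GRing.Theory Num.Theory.
Local Open Scope classical_set_scope.
Local Open Scope ring_scope.

Section Monoids.
Variables (T : Type) (mul : T -> T -> T) (e : T).

Definition mpow (a : T) (k : nat) : T := iter k (mul a) e.

Definition mprod (s : seq T) : T := foldr mul e s.

(* Notions relative to a submonoid S of T (S = setT gives the whole monoid). *)
Definition is_unit_in (S : set T) (u : T) : Prop :=
  S u /\ exists2 v, S v & mul u v = e.

Definition is_atom_in (S : set T) (u : T) : Prop :=
  [/\ S u, ~ is_unit_in S u &
  forall a b, S a -> S b -> u = mul a b -> is_unit_in S a \/ is_unit_in S b].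

Definition lengths_in (S : set T) (a : T) : set nat :=
  [set l | exists eps, exists s : seq T,
      [/\ is_unit_in S eps, (forall i, (i < size s)%N -> is_atom_in S (nth e s i)),
          size s = l & a = mul eps (mprod s)]].

Definition submonoid (S : set T) : Prop :=
  S e /\ forall a b, S a -> S b -> S (mul a b).

(* (T, mul, e) is a monoid in the sense of the paper: commutative semigroup
   with identity, unit-cancellative. *)
Definition is_monoid : Prop :=
  [/\ forall a b, mul a b = mul b a,
      forall a b c, mul a (mul b c) = mul (mul a b) c,
      forall a, mul e a = a &
      forall a u, a = mul a u -> is_unit_in setT u].

Definition finite_nat_set (L : set nat) : Prop := exists N, forall l, L l -> (l <= N)%N.

Definition BF_monoid : Prop :=
  is_monoid /\ forall a, finite_nat_set (lengths_in setT a) /\ lengths_in setT a !=set0.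

Definition half_factorial_in (S : set T) : Prop :=
  forall a, S a -> exists l, lengths_in S a = [set l].

Definition divides (p a : T) : Prop := exists c, a = mul p c.

Definition is_prime (p : T) : Prop :=
  ~ is_unit_in setT p /\ forall a b, divides p (mul a b) -> divides p a \/ divides p b.

Definition cancellative (p : T) : Prop := forall b c, mul p b = mul p c -> b = c.

Definition internal_direct_product (H1 H2 : set T) : Prop :=
  [/\ submonoid H1, submonoid H2 &
      forall a, exists a1 a2, [/\ H1 a1, H2 a2, a = mul a1 a2 &
        forall b1 b2, H1 b1 -> H2 b2 -> a = mul b1 b2 -> b1 = a1 /\ b2 = a2]].

Variable R : realType.

Definition rho (L : set nat) : R :=
  if `[< L = [set 0%N] >] then 1
  else sup [set (n%:R : R) | n in L] / inf [set (n%:R : R) | n in L].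

Definition elasticity : \bar R :=
  ereal_sup [set (rho (lengths_in setT a))%:E | a in [set: T]].

Definition accepted_elasticity : Prop :=
  exists a, (rho (lengths_in setT a))%:E = elasticity.

Definition fully_elastic : Prop :=
  forall q : rat, 1 < q -> ((ratr q : R)%:E < elasticity)%E ->
    exists a, rho (lengths_in setT a) = ratr q.

Definition cond_a (H1 H2 : set T) : Prop :=
  [/\ internal_direct_product H1 H2, half_factorial_in H1 &
      exists a, H1 a /\ ~ is_unit_in H1 a].

Definition cond_b : Prop :=
  forall q : rat, 1 < q -> ((ratr q : R)%:E < elasticity)%E ->
    exists c, forall k, (0 < k)%N ->
      rho (lengths_in setT (mpow c k)) = rho (lengths_in setT c) /\
      ratr q < rho (lengths_in setT c).

Definition cond_b' (H2 : set T) : Prop :=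
  forall m : nat, (2 <= m)%N -> exists a, H2 a /\
    let L := lengths_in H2 a in
    [/\ L 2%N, L m & forall l, L l -> (2 <= l <= m)%N].

End Monoids.

(* Main.v *)
Require Import Defs.
From HB Require Import structures.
From mathcomp Require Import all_boot all_order all_algebra zify.
From mathcomp Require Import boolp classical_sets reals constructive_ereal ereal.
Import Order.TTheory GRing.Theory Num.Theory.
Local Open Scope classical_set_scope.

Section RhoL.
Local Open Scope ring_scope.
Lemma rho_MM (R : realType) (Ls : set nat) M m : Ls M -> Ls m ->
  (forall l, Ls l -> (m <= l <= M)%N) -> (0 < m)%N -> rho R Ls = M%:R / m%:R.
Proof.
move=> LM Lm Hb m0; rewrite /rho asboolF; last first.
  by move=> HL; rewrite HL in Lm; rewrite Lm in m0.
set E := [set (n%:R : R) | n in Ls].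
have nE : E !=set0 by exists M%:R, M.
have ubE : ubound E M%:R by move=> _ [n Ln <-]; rewrite ler_nat; case/andP: (Hb n Ln).
have lbE : lbound E m%:R by move=> _ [n Ln <-]; rewrite ler_nat; case/andP: (Hb n Ln).
have -> : sup E = M%:R.
  apply/eqP; rewrite eq_le; apply/andP; split; first exact: ge_sup.
  by apply: ub_le_sup; [exists M%:R | exists M].
have -> : inf E = m%:R.
  apply/eqP; rewrite eq_le; apply/andP; split; last exact: lb_le_inf.
  by apply: ge_inf; [exists m%:R | exists m].
by [].
Qed.

Lemma rho_0 (R : realType) : rho R [set 0%N] = 1.
Proof. by rewrite /rho asboolT. Qed.

Lemma rat_nd (R : realType) (q : rat) : 1 < q ->
  exists r s, [/\ (0 < s)%N, (s < r)%N & (ratr q : R) = r%:R / s%:R].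
Proof.
move=> q1; exists `|numq q|%N, `|denq q|%N.
have E : (ratr q : R) = (`|numq q|%N)%:R / (`|denq q|%N)%:R.
  rewrite -{1}[q]divq_num_den fmorph_div !rmorph_int.
  rewrite -[X in X%:~R / _](gez0_abs (m := numq q)); last by rewrite numq_ge0 ltW // (lt_trans ltr01 q1).
  by rewrite -[X in _ / X%:~R](gez0_abs (m := denq q)) ?ltW ?denq_gt0 // -!pmulrn.
have s0 : (0 < `|denq q|)%N by rewrite absz_gt0 gt_eqF ?denq_gt0.
split => //.
have : (1 : R) < ratr q by rewrite -(rmorph1 (@ratr R)) ltr_rat.
by rewrite E ltr_pdivlMr ?ltr0n // mul1r ltr_nat.
Qed.

End RhoL.

Lemma nat_max (P : nat -> Prop) n0 N : P n0 -> (forall l, P l -> (l <= N)%N) ->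
  exists M, P M /\ forall l, P l -> (l <= M)%N.
Proof.
move=> P0 PN.
have ex : exists i, `[< P i >] by exists n0; apply/asboolP.
have ub : forall i, `[< P i >] -> (i <= N)%N by move=> i /asboolP; apply: PN.
case: (ex_maxnP ex ub) => M /asboolP PM HM; exists M; split => // l Pl.
by apply: HM; apply/asboolP.
Qed.

Lemma nat_min (P : nat -> Prop) n0 : P n0 ->
  exists m, P m /\ forall l, P l -> (m <= l)%N.
Proof.
move=> P0.
have ex : exists i, `[< P i >] by exists n0; apply/asboolP.
case: (ex_minnP ex) => m /asboolP Pm Hm; exists m; split => // l Pl.
by apply: Hm; apply/asboolP.
Qed.

Section Alg.
Variables (T : Type) (mul : T -> T -> T) (e : T).
Hypotheses (mulC : forall a b, mul a b = mul b a)
  (mulA : forall a b c, mul a (mul b c) = mul (mul a b) c)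
  (mul1 : forall a, mul e a = a).

Local Notation L S a := (lengths_in mul e S a).
Local Notation U S u := (is_unit_in mul e S u).
Local Notation At S u := (is_atom_in mul e S u).
Local Notation SM S := (submonoid mul e S).
Local Notation AllAt S s := (forall i, (i < size s)%N -> is_atom_in mul e S (nth e s i)).

Lemma mulr1 a : mul a e = a. Proof. by rewrite mulC mul1. Qed.
Lemma mulCA a b c : mul a (mul b c) = mul b (mul a c).
Proof. by rewrite mulA (mulC a b) -mulA. Qed.
Lemma mulACA a b c d : mul (mul a b) (mul c d) = mul (mul a c) (mul b d).
Proof. by rewrite -!mulA (mulCA b c). Qed.

Lemma mprod_cat s t : mprod mul e (s ++ t) = mul (mprod mul e s) (mprod mul e t).
Proof. by elim: s => [|x s IH] /=; rewrite ?mul1 // IH mulA. Qed.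

Lemma mpowS a k : mpow mul e a k.+1 = mul a (mpow mul e a k). Proof. by []. Qed.
Lemma mpow0 a : mpow mul e a 0 = e. Proof. by []. Qed.
Lemma mpowD a m n : mpow mul e a (m + n) = mul (mpow mul e a m) (mpow mul e a n).
Proof. by elim: m => [|m IH]; rewrite ?add0n ?mpow0 ?mul1 // addSn !mpowS IH mulA. Qed.

Lemma allat_cons S x s : At S x -> AllAt S s -> AllAt S (x :: s).
Proof. by move=> Hx Hs [|i] //= Hi; apply: Hs. Qed.
Lemma allat_consE S x s : AllAt S (x :: s) -> At S x /\ AllAt S s.
Proof. by move=> H; split; [apply: (H 0%N) | move=> i Hi; apply: (H i.+1)]. Qed.
Lemma allat_cat S s t : AllAt S s -> AllAt S t -> AllAt S (s ++ t).
Proof.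
move=> Hs Ht i; rewrite size_cat nth_cat => Hl.
case: (boolP (i < size s)%N) => Hi; first exact: Hs Hi.
by apply: Ht; rewrite ltn_subLR // leqNgt.
Qed.

Lemma unit_mul S a b : SM S -> U S a -> U S b -> U S (mul a b).
Proof.
move=> [_ SMm] [Sa [v Sv av]] [Sb [w Sw bw]]; split; first exact: SMm.
by exists (mul v w); [exact: SMm | rewrite mulACA av bw mul1].
Qed.
Lemma unit_e S : SM S -> U S e.
Proof. by move=> [Se _]; split => //; exists e => //; rewrite mul1. Qed.

Lemma len_mul S a b l l' : SM S -> L S a l -> L S b l' -> L S (mul a b) (l + l').
Proof.
move=> SS [eps [s [Ue As <- ->]]] [eps' [t [Ue' At' <- ->]]].
exists (mul eps eps'), (s ++ t); split.
- exact: unit_mul.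
- exact: allat_cat.
- by rewrite size_cat.
- by rewrite mprod_cat mulACA.
Qed.

Lemma len_e S : SM S -> L S e 0.
Proof. move=> SS; exists e, [::]; split => //; exact: unit_e. Qed.

Lemma len_atom S u : SM S -> At S u -> L S u 1.
Proof.
move=> SS Au; exists e, [:: u]; split => //; first exact: unit_e.
- by move=> [|i] //.
- by rewrite /= mulr1 mul1.
Qed.

Lemma len_pow S u n : SM S -> At S u -> L S (mpow mul e u n) n.
Proof.
move=> SS Au; elim: n => [|n IH]; first exact: len_e.
by rewrite mpowS -add1n; apply: len_mul => //; apply: len_atom.
Qed.

Lemma len_powM S c k l : SM S -> L S c l -> L S (mpow mul e c k) (k * l).
Proof.
move=> SS Hc; elim: k => [|k IH]; first by rewrite mul0n; exact: len_e.
by rewrite mpowS mulSn; apply: len_mul.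
Qed.

Lemma len_mono S S' a l : (forall u, U S u -> U S' u) -> (forall u, At S u -> At S' u) ->
  L S a l -> L S' a l.
Proof.
move=> HU HA [eps [s [Ue As <- ->]]]; exists eps, s; split => //; first exact: HU.
by move=> i Hi; apply: HA; apply: As.
Qed.

Lemma unitT_mulC a b : U setT (mul a b) -> U setT a.
Proof.
move=> [_ [w _ H]]; split => //; exists (mul b w) => //; by rewrite mulA.
Qed.

Lemma len0_unit a : L setT a 0 -> U setT a.
Proof.
move=> [eps [s [Ue _ Hs ->]]]; case: s Hs => // _; by rewrite /= mulr1.
Qed.

Lemma len0_only a l : L setT a 0 -> L setT a l -> l = 0%N.
Proof.
move=> /len0_unit Ua [eps [s [Ue As <- Ha]]]; case: s As Ha => // v s As Ha.
have [[_ nUv _] _] := allat_consE _ _ _ As.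
exfalso; apply: nUv; rewrite Ha /= mulCA in Ua; exact: unitT_mulC Ua.
Qed.

Lemma len_unit S w : SM S -> U S w -> L S w 0.
Proof. move=> SS Uw; exists w, [::]; split => //=; by rewrite mulr1. Qed.

Lemma smT : SM setT. Proof. by []. Qed.
Lemma unit_sub S u : U S u -> U setT u.
Proof. by move=> [_ [v _ H]]; split => //; exists v. Qed.

Arguments unit_sub {S u}.
Arguments unitT_mulC {a b}.
Arguments allat_consE {S x s}.
Arguments unit_mul {S a b}.
Arguments len_mul {S a b l l'}.
Arguments len_atom {S u}.
Arguments len_unit {S w}.
Arguments len_mono {S S' a l}.
Section DP1.
Variables (H1 H2 : set T).
Hypothesis idp : internal_direct_product mul e H1 H2.

Lemma dp_dec a : exists a1 a2, [/\ H1 a1, H2 a2 & a = mul a1 a2].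
Proof. case: idp => _ _ /(_ a) [a1 [a2 [? ? ? _]]]; by exists a1, a2. Qed.

Lemma dp_uniq x1 x2 y1 y2 : H1 x1 -> H2 x2 -> H1 y1 -> H2 y2 ->
  mul x1 x2 = mul y1 y2 -> x1 = y1 /\ x2 = y2.
Proof.
move=> ? ? ? ? Hxy; case: idp => _ _ /(_ (mul x1 x2)) [a1 [a2 [_ _ _ Hu]]].
have [-> ->] := Hu x1 x2 ltac:(done) ltac:(done) erefl.
by have [-> ->] := Hu y1 y2 ltac:(done) ltac:(done) Hxy.
Qed.

Lemma dp_swap : internal_direct_product mul e H2 H1.
Proof.
case: idp => S1 S2 D; split => // a; have [a1 [a2 [h1 h2 Ha _]]] := D a.
exists a2, a1; split => //; first by rewrite Ha mulC.
move=> b2 b1 hb2 hb1 Hb; rewrite mulC in Hb.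
have [-> ->] := @dp_uniq b1 b2 a1 a2 hb1 hb2 h1 h2 (esym (etrans (esym Ha) Hb)); by [].
Qed.

Lemma H1e : H1 e. Proof. by case: idp => [[]]. Qed.
Lemma H1M a b : H1 a -> H1 b -> H1 (mul a b). Proof. by case: idp => [[_ ?]]; auto. Qed.

Lemma unitT_in a : H1 a -> U setT a -> U H1 a.
Proof.
move=> Ha [_ [w _ aw]]; split => //.
have [w1 [w2 [h1 h2 Hw]]] := dp_dec w.
have H2e : H2 e by case: idp => _ [].
have := @dp_uniq (mul a w1) w2 e e (@H1M a w1 Ha h1) h2 H1e H2e.
rewrite mul1 -mulA -Hw aw => /(_ erefl) [aw1 _].
by exists w1.
Qed.
End DP1.
Arguments dp_dec {H1 H2}.
Arguments dp_uniq {H1 H2} idp {x1 x2 y1 y2}.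
Arguments dp_swap {H1 H2}.
Arguments H1M {H1 H2} idp {a b}.
Arguments H1e {H1 H2}.
Arguments unitT_in {H1 H2} idp {a}.

Lemma atomT_side {H1 H2 : set T} (idp : internal_direct_product mul e H1 H2) v1 v2 : H1 v1 -> H2 v2 -> At setT (mul v1 v2) -> U setT v1 ->
  U H1 v1 /\ At H2 v2.
Proof.
move=> h1 h2 [_ nU Hat] Uv1; split; first exact (unitT_in idp h1 Uv1).
split => //.
- move=> /unit_sub Uv2; apply: nU; apply: unit_mul => //.
- move=> a b Ha Hb Hv2.
  have Hd : mul v1 v2 = mul (mul v1 a) b by rewrite Hv2 mulA.
  case: (Hat _ _ I I Hd) => [Ua|Ub].
  + left; apply (unitT_in (dp_swap idp) Ha).
    by rewrite mulC in Ua; apply: unitT_mulC Ua.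
  + by right; apply (unitT_in (dp_swap idp) Hb).
Qed.

Lemma atomT_split {H1 H2 : set T} (idp : internal_direct_product mul e H1 H2) v1 v2 : H1 v1 -> H2 v2 -> At setT (mul v1 v2) ->
  (U H1 v1 /\ At H2 v2) \/ (At H1 v1 /\ U H2 v2).
Proof.
move=> h1 h2 Av; have [_ _ Hat] := Av.
have [] := Hat v1 v2 I I erefl => Uv.
- by left; apply (atomT_side idp _ _ h1 h2 Av Uv).
- right; rewrite mulC in Av.
  by have [? ?] := atomT_side (dp_swap idp) _ _ h2 h1 Av Uv.
Qed.

Lemma atom1_T {H1 H2 : set T} (idp : internal_direct_product mul e H1 H2) v : At H1 v -> At setT v.
Proof.
move=> [h1 nU Hat]; split => //.
- by move=> /(unitT_in idp h1).
- move=> a b _ _ Hv.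
  have [a1 [a2 [ha1 ha2 Ea]]] := dp_dec idp a.
  have [b1 [b2 [hb1 hb2 Eb]]] := dp_dec idp b.
  subst a b.
  have H2e : H2 e by case: idp => _ [].
  have H2M : forall x y, H2 x -> H2 y -> H2 (mul x y) by case: idp => _ [_ ?].
  rewrite mulACA in Hv.
  have [E1 E2] := dp_uniq idp (H1M idp ha1 hb1)
     (H2M _ _ ha2 hb2) h1 H2e ltac:(by rewrite mulr1).
  have Ua2 : U setT a2 by split => //; exists b2.
  have Ub2 : U setT b2 by split => //; exists a2 => //; rewrite mulC.
  have [Ua1|Ub1] := Hat a1 b1 ha1 hb1 (esym E1).
  + by left; apply: unit_mul => //; apply: unit_sub Ua1.
  + by right; apply: unit_mul => //; apply: unit_sub Ub1.
Qed.

Lemma dp_lengths {H1 H2 : set T} (idp : internal_direct_product mul e H1 H2) s : forall eps y1 y2, U setT eps -> AllAt setT s -> H1 y1 -> H2 y2 ->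
  mul y1 y2 = mul eps (mprod mul e s) ->
  exists a b, [/\ (a + b = size s)%N, L H1 y1 a & L H2 y2 b].
Proof.
have SM1 : SM H1 by case: idp.
have SM2 : SM H2 by case: idp.
elim: s => [|v s IH] eps y1 y2 Ue As h1 h2 /=.
- rewrite mulr1 => Hy; exists 0%N, 0%N; split => //.
  + apply: len_unit => //; apply (unitT_in idp h1).
    by rewrite -Hy in Ue; apply: unitT_mulC Ue.
  + apply: len_unit => //; apply (unitT_in (dp_swap idp) h2).
    by rewrite -Hy mulC in Ue; apply: unitT_mulC Ue.
- move=> Hy; have [Av As'] := allat_consE As.
  have [w1 [w2 [hw1 hw2 Hw]]] := dp_dec idp (mul eps (mprod mul e s)).
  have [a [b [Hab La Lb]]] := IH eps w1 w2 Ue As' hw1 hw2 (esym Hw).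
  have [v1 [v2 [hv1 hv2 Hv]]] := dp_dec idp v.
  have H2M : forall x y, H2 x -> H2 y -> H2 (mul x y) by case: idp => _ [_ ?].
  have [E1 E2] := dp_uniq idp h1 h2
     (H1M idp hv1 hw1) (H2M _ _ hv2 hw2) ltac:(by rewrite Hy mulCA Hw Hv mulACA).
  rewrite Hv in Av; have [[Uv1 Av2]|[Av1 Uv2]] := atomT_split idp _ _ hv1 hv2 Av.
  + exists a, b.+1; split; first by rewrite addnS Hab.
    * by rewrite E1 -(add0n a); apply: len_mul => //; apply: len_unit.
    * by rewrite E2 -add1n; apply: len_mul => //; apply: len_atom.
  + exists a.+1, b; split; first by rewrite addSn Hab.
    * by rewrite E1 -add1n; apply: len_mul => //; apply: len_atom.
    * by rewrite E2 -(add0n b); apply: len_mul => //; apply: len_unit.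
Qed.

Lemma len_split {H1 H2 : set T} (idp : internal_direct_product mul e H1 H2) y1 y2 l : H1 y1 -> H2 y2 -> L setT (mul y1 y2) l ->
  exists a b, [/\ (a + b = l)%N, L H1 y1 a & L H2 y2 b].
Proof.
move=> h1 h2 [eps [s [Ue As <- Hy]]]; exact (dp_lengths idp _ _ _ _ Ue As h1 h2 Hy).
Qed.

Lemma len_1T {H1 H2 : set T} (idp : internal_direct_product mul e H1 H2) y l : L H1 y l -> L setT y l.
Proof. apply: len_mono => u; [exact: unit_sub | exact: (atom1_T idp)]. Qed.

Lemma len_prod {H1 H2 : set T} (idp : internal_direct_product mul e H1 H2) y1 y2 g l :
  H1 y1 -> H2 y2 -> L H1 y1 = [set g] ->
  (L setT (mul y1 y2) l <-> exists b, l = (g + b)%N /\ L H2 y2 b).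
Proof.
move=> h1 h2 Hg; split.
- move=> /(len_split idp _ _ _ h1 h2) [a [b [<- La Lb]]]; exists b; split => //.
  by rewrite Hg in La; rewrite La.
- move=> [b [-> Lb]]; apply: len_mul => //.
  + apply: (len_1T idp); by rewrite Hg.
  + exact: (len_1T (dp_swap idp)).
Qed.

Lemma H1pow {H1 H2 : set T} (idp : internal_direct_product mul e H1 H2) u n :
  H1 u -> H1 (mpow mul e u n).
Proof.
move=> hu; elim: n => [|n IH]; first exact: (H1e idp).
by rewrite mpowS; apply: (H1M idp).
Qed.

Lemma hf_shift {H1 H2 : set T} (idp : internal_direct_product mul e H1 H2)
  (hf : half_factorial_in mul e H1) u n x l : At H1 u ->
  (L setT (mul (mpow mul e u n) x) l <-> exists l', l = (n + l')%N /\ L setT x l').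
Proof.
move=> Au; have SM1 : SM H1 by case: idp.
have hu : H1 u by case: Au.
have [x1 [x2 [h1 h2 Ex]]] := dp_dec idp x; subst x.
have [al Hal] := hf x1 h1.
have hp := H1M idp (H1pow idp u n hu) h1.
have [be Hbe] := hf _ hp.
have Lnal : L H1 (mul (mpow mul e u n) x1) (n + al).
  by apply: len_mul => //; [exact: len_pow | rewrite Hal].
rewrite Hbe in Lnal.
rewrite mulA (len_prod idp _ _ _ _ hp h2 Hbe).
split.
- move=> [b [-> Lb]]; exists (al + b); split; first by rewrite -Lnal addnA.
  by apply/(len_prod idp _ _ _ _ h1 h2 Hal); exists b.
- move=> [l' [-> /(len_prod idp _ _ _ _ h1 h2 Hal) [b [-> Lb]]]].
  by exists b; rewrite -Lnal addnA.
Qed.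

Lemma len_H2 {H1 H2 : set T} (idp : internal_direct_product mul e H1 H2)
  (hf : half_factorial_in mul e H1) a l : H2 a ->
  (L setT a l <-> L H2 a l).
Proof.
move=> h2; have SM1 : SM H1 by case: idp.
have [g Hg] := hf e (H1e idp).
have L0 : L H1 e 0 by exact: len_e.
rewrite Hg in L0; rewrite -L0 in Hg.
rewrite -{1}(mul1 a) (len_prod idp _ _ _ _ (H1e idp) h2 Hg).
by split => [[b [-> ]] | H]; last exists l.
Qed.

Lemma hf_atom {H1 : set T} (hf : half_factorial_in mul e H1) (SM1 : SM H1) a :
  H1 a -> ~ U H1 a -> exists u, At H1 u.
Proof.
move=> ha nU; have [l Hl] := hf a ha.
have : L H1 a l by rewrite Hl.
move=> [eps [[|v s] [Ue As _ Ha]]].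
- by exfalso; apply: nU; rewrite Ha /= mulr1.
- by exists v; have [] := allat_consE As.
Qed.

Section BFpart.
Hypothesis bf : forall a, finite_nat_set (L setT a) /\ L setT a !=set0.

Lemma Lstruct a : L setT a = [set 0%N] \/
  exists M m, [/\ L setT a M, L setT a m, (forall l, L setT a l -> (m <= l <= M)%N) & (0 < m)%N].
Proof.
have [[N HN] [l0 Hl0]] := bf a.
have [M [LM HM]] := nat_max _ _ _ Hl0 HN.
have [m [Lm Hm]] := nat_min _ _ Hl0.
case: (posnP m) => [m0|mpos].
- left; rewrite m0 in Lm; apply/seteqP; split => x /=.
  + exact: (len0_only _ _ Lm).
  + by move=> ->.
- right; exists M, m; split => // l Hl; by rewrite Hm ?HM.
Qed.

Local Open Scope ring_scope.

Lemma rho_ge1 (R : realType) a : 1 <= rho R (L setT a).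
Proof.
case: (Lstruct a) => [->|[M [m [LM Lm Hb m0]]]]; first by rewrite rho_0.
rewrite (rho_MM _ _ _ _ LM Lm Hb m0) ler_pdivlMr ?ltr0n // mul1r ler_nat.
by case/andP: (Hb _ LM).
Qed.

Lemma rho_pow_ge (R : realType) c k : (0 < k)%N ->
  rho R (L setT c) <= rho R (L setT (mpow mul e c k)).
Proof.
move=> k0; case: (Lstruct c) => [->|[M1 [m1 [LM1 Lm1 Hb1 m10]]]].
  by rewrite rho_0 rho_ge1.
have LkM := len_powM _ _ k _ smT LM1; have Lkm := len_powM _ _ k _ smT Lm1.
case: (Lstruct (mpow mul e c k)) => [HL|[Mk [mk [LMk Lmk Hbk mk0]]]].
  by rewrite HL in Lkm; move: Lkm => /= /eqP; rewrite muln_eq0 gtn_eqF // gtn_eqF.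
rewrite (rho_MM _ _ _ _ LM1 Lm1 Hb1 m10) (rho_MM _ _ _ _ LMk Lmk Hbk mk0).
rewrite ler_pdivrMr ?ltr0n // mulrAC ler_pdivlMr ?ltr0n // -!natrM ler_nat.
have /andP [_ h1] := Hbk _ LkM; have /andP [h2 _] := Hbk _ Lkm.
have /andP [_ h3] := Hb1 _ Lm1.
nia.
Qed.

Lemma part2 (R : realType) : accepted_elasticity mul e R -> cond_b mul e R.
Proof.
move=> [c Hc] q q1 qlt; exists c => k k0; split.
- apply/eqP; rewrite eq_le rho_pow_ge // andbT -lee_fin Hc.
  by apply: ereal_sup_ubound; exists (mpow mul e c k).
- by rewrite -lte_fin Hc.
Qed.

Lemma part4 (R : realType) :
  (exists H1 H2, cond_a mul e H1 H2 /\ cond_b' mul e H2) -> fully_elastic mul e R.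
Proof.
move=> [H1 [H2 [[idp hf [a0 [ha0 nU0]]] hb']]] q q1 _.
have SM1 : SM H1 by case: idp.
have [u Au] := hf_atom hf SM1 a0 ha0 nU0.
have [r [s [s0 sr ->]]] := rat_nd R q q1.
pose m' := (2 * (r - s) + 2)%N; pose n := (2 * s - 2)%N.
have [a [ha2 [L2 Lm Hb]]] := hb' m' ltac:(rewrite /m'; lia).
have Hsh : forall l, L setT (mul (mpow mul e u n) a) l <-> exists l', l = (n + l')%N /\ L H2 a l'.
  move=> l; rewrite (hf_shift idp hf u n a l Au).
  by split => [[l' [-> /(len_H2 idp hf a l' ha2) H]]|[l' [-> H]]]; exists l'; split => //;
    apply/(len_H2 idp hf a l' ha2).
exists (mul (mpow mul e u n) a).
have LM : L setT (mul (mpow mul e u n) a) (n + m') by apply/Hsh; exists m'.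
have Lmm : L setT (mul (mpow mul e u n) a) (n + 2) by apply/Hsh; exists 2%N.
have Hbb : forall l, L setT (mul (mpow mul e u n) a) l -> (n + 2 <= l <= n + m')%N.
  by move=> l /Hsh [l' [-> /Hb]]; rewrite !leq_add2l.
have m0 : (0 < n + 2)%N by rewrite addn2.
rewrite (rho_MM _ _ _ _ LM Lmm Hbb m0).
apply/eqP; rewrite eqr_div ?pnatr_eq0 -?lt0n ?addn2 // -!natrM eqr_nat -addn2.
apply/eqP; rewrite /n /m'; nia.
Qed.

Lemma part3 (R : realType) :
  (exists H1 H2, cond_a mul e H1 H2) -> cond_b mul e R -> fully_elastic mul e R.
Proof.
move=> [H1 [H2 [idp hf [a0 [ha0 nU0]]]]] hb q q1 qlt.
have SM1 : SM H1 by case: idp.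
have [u Au] := hf_atom hf SM1 a0 ha0 nU0.
have [c Hc] := hb q q1 qlt.
have [r [s [s0 sr Eq]]] := rat_nd R q q1.
have [_ qc] := Hc 1%N isT.
rewrite Eq in qc.
have rs1 : (1 : R) < r%:R / s%:R by rewrite ltr_pdivlMr ?ltr0n // mul1r ltr_nat.
case: (Lstruct c) => [HL|[M1 [m1 [LM1 Lm1 Hb1 m10]]]].
  by rewrite HL rho_0 in qc; move: (lt_trans rs1 qc); rewrite ltxx.
pose k0 := (r - s)%N.
have k00 : (0 < k0)%N by rewrite /k0 subn_gt0.
have [Hk _] := Hc k0 k00.
have LkM := len_powM _ _ k0 _ smT LM1; have Lkm := len_powM _ _ k0 _ smT Lm1.
rewrite (rho_MM _ _ _ _ LM1 Lm1 Hb1 m10) in Hk qc.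
case: (Lstruct (mpow mul e c k0)) => [HL|[Mk [mk [LMk Lmk Hbk mk0]]]].
  by rewrite HL in Lkm; move: Lkm => /= /eqP; rewrite muln_eq0 gtn_eqF // gtn_eqF.
rewrite (rho_MM _ _ _ _ LMk Lmk Hbk mk0) in Hk.
move/eqP: Hk; rewrite eqr_div ?pnatr_eq0 -?lt0n // -!natrM eqr_nat => /eqP Hk.
move: qc; rewrite ltr_pdivrMr ?ltr0n // mulrAC ltr_pdivlMr ?ltr0n // -!natrM ltr_nat => qc.
have /andP [_ h1] := Hbk _ LkM; have /andP [h2 _] := Hbk _ Lkm.
have /andP [_ h3] := Hb1 _ Lm1.
have M10 : (0 < M1)%N by apply: leq_trans h3.
have Emk : mk = (k0 * m1)%N.
  apply/eqP; rewrite eqn_leq h2 /=.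
  rewrite -(leq_pmul2l M10) -Hk mulnA (mulnC M1); exact: leq_mul.
have EMk : Mk = (k0 * M1)%N.
  by apply/eqP; rewrite -(eqn_pmul2r m10) Hk Emk mulnCA mulnA.
pose m := (s * M1 - r * m1)%N.
have Hm : (s * M1 = r * m1 + m)%N by rewrite /m; lia.
have Hr : r = (s + k0)%N by rewrite /k0 subnKC // ltnW.
have Hsh : forall l, L setT (mul (mpow mul e u m) (mpow mul e c k0)) l <->
   exists l', l = (m + l')%N /\ L setT (mpow mul e c k0) l'.
  by move=> l; rewrite (hf_shift idp hf u m _ l Au).
exists (mul (mpow mul e u m) (mpow mul e c k0)).
have LM : L setT (mul (mpow mul e u m) (mpow mul e c k0)) (m + Mk) by apply/Hsh; exists Mk.
have Lmm : L setT (mul (mpow mul e u m) (mpow mul e c k0)) (m + mk) by apply/Hsh; exists mk.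
have Hbb : forall l, L setT (mul (mpow mul e u m) (mpow mul e c k0)) l -> (m + mk <= l <= m + Mk)%N.
  by move=> l /Hsh [l' [-> /Hbk]]; rewrite !leq_add2l.
have mm0 : (0 < m + mk)%N by rewrite addn_gt0 mk0 orbT.
rewrite (rho_MM _ _ _ _ LM Lmm Hbb mm0) Eq.
apply/eqP; rewrite eqr_div ?pnatr_eq0 -?lt0n // -!natrM eqr_nat.
apply/eqP; rewrite EMk Emk; nia.
Qed.

Section Prime.
Variable p : T.
Hypotheses (pp : is_prime mul e p) (pc : cancellative mul p).
Local Notation P n := (mpow mul e p n).

Lemma pnU : ~ U setT p. Proof. by case: pp. Qed.

Lemma pow_canc k x y : mul (P k) x = mul (P k) y -> x = y.
Proof.
elim: k => [|k IH]; first by rewrite mpow0 !mul1.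
by rewrite mpowS -!mulA => /pc /IH.
Qed.

Lemma pow_e d : P d = e -> d = 0%N.
Proof.
case: d => // d; rewrite mpowS => H; exfalso; apply: pnU; split => //; by exists (P d).
Qed.

Lemma pow_inj_le m n : (m <= n)%N -> P m = P n -> m = n.
Proof.
move=> mn; rewrite -(subnKC mn) mpowD -{1}(mulr1 (P m)) => /pow_canc /esym /pow_e ->.
by rewrite addn0.
Qed.

Lemma pow_inj : injective (mpow mul e p).
Proof.
move=> m n E; case: (leqP m n) => mn; first exact: pow_inj_le.
by apply/esym/pow_inj_le => //; apply: ltnW.
Qed.

Lemma p_atom : At setT p.
Proof.
split => //; first exact: pnU.
move=> a b _ _ Hp.
have [[z Hz]|[z Hz]] : divides mul p a \/ divides mul p b.
  by case: pp => _; apply; exists e; rewrite mulr1.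
- right; split => //; exists z => //.
  have : mul p (mul z b) = mul p e by rewrite mulA -Hz -Hp mulr1.
  by move/pc; rewrite mulC.
- left; split => //; exists z => //.
  have : mul p (mul a z) = mul p e by rewrite mulCA -Hz -Hp mulr1.
  by move/pc; rewrite mulC.
Qed.

Lemma ndiv_e : ~ divides mul p e.
Proof. move=> [c Hc]; apply: pnU; split => //; by exists c. Qed.

Lemma uniq_helper m n x y : (m < n)%N -> ~ divides mul p x ->
  mul (P m) x = mul (P n) y -> False.
Proof.
move=> mn nd; rewrite -(subnKC (ltnW mn)) mpowD -mulA => /pow_canc Hx.
apply: nd; move: Hx; rewrite -subn_gt0 in mn; case: (n - m)%N mn => // d _.
by rewrite mpowS -mulA => ->; exists (mul (P d) y).
Qed.

Lemma prime_idp : internal_direct_product mul e [set a | exists n, a = P n]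
  [set a | ~ divides mul p a].
Proof.
split.
- split; first by exists 0%N.
  by move=> a b [m ->] [n ->]; exists (m + n)%N; rewrite mpowD.
- split; first exact: ndiv_e.
  move=> a b /= na nb dab; case: pp => _ /(_ a b dab) [] //.
- move=> a.
  have [N HN] := (bf a).1.
  have Hb : forall n, divides mul (P n) a -> (n <= N)%N.
    move=> n [c Hc]; have [l Hl] := (bf c).2.
    have := len_mul smT (len_pow _ p n smT p_atom) Hl; rewrite -Hc => /HN.
    by apply: leq_trans; apply: leq_addr.
  have [n [[c Hc] Hn]] := nat_max (fun n => divides mul (P n) a) 0%N N
      ltac:(by exists a; rewrite mpow0 mul1) Hb.
  exists (P n), c; split => //=; first by exists n.
  + move=> [c' Hc']; have : (n.+1 <= n)%N.
      apply: Hn; exists c'; by rewrite Hc Hc' mpowS mulCA mulA.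
    by rewrite ltnn.
  + move=> b1 b2 [m ->] /= nb2 Ha; rewrite Hc in Ha.
    have mn : m = n.
      case: (ltngtP m n) => // H; exfalso.
      * exact: (uniq_helper _ _ _ _ H nb2 (esym Ha)).
      * apply: (uniq_helper _ _ _ _ H _ Ha) => [[c' Hc']].
        have : (n.+1 <= n)%N by apply: Hn; exists c'; rewrite Hc Hc' mpowS mulCA mulA.
        by rewrite ltnn.
    subst m; split => //; exact: (esym (pow_canc _ _ _ Ha)).
Qed.

Local Notation H1p := [set a | exists n, a = P n].

Lemma H1p_unit x : U H1p x -> x = e.
Proof.
move=> [[k ->] [v [j ->] H]]; rewrite -mpowD in H.
by move: (pow_e _ H) => /eqP; rewrite addn_eq0 => /andP [/eqP -> _].
Qed.

Lemma H1p_p : H1p p. Proof. by exists 1%N; rewrite /= mulr1. Qed.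

Lemma Ue0 : U H1p (P 0).
Proof. split; first by exists 0%N. exists e; first by exists 0%N. by rewrite mul1. Qed.

Lemma H1p_atom_p : At H1p p.
Proof.
split; first exact: H1p_p.
- by move/unit_sub; apply: pnU.
- move=> a b [i ->] [j ->]; rewrite -mpowD => /esym.
  move=> Eij; have E1 : P (i + j) = P 1 by rewrite Eij /= mulr1.
  move: (pow_inj _ _ E1); case: i {Eij E1} => [|i].
  + by move=> _; left; apply: Ue0.
  + case: j => [|j] H; first by right; apply: Ue0.
    by rewrite addSn addnS in H.
Qed.

Lemma H1p_atom v : At H1p v -> v = p.
Proof.
move=> [[k Hk] nU Hat]; subst v; case: k nU Hat => [|k] nU Hat.
- exfalso; apply: nU; split; first by exists 0%N.
  by exists e; [exists 0%N | rewrite mpow0 mul1].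
- rewrite mpowS in nU Hat *.
  have [Up|Uk] := Hat p (P k) H1p_p ltac:(by exists k) erefl.
  + by exfalso; apply: pnU; apply: unit_sub Up.
  + by rewrite (H1p_unit _ Uk) mulr1.
Qed.

Lemma mprod_p s : AllAt H1p s -> mprod mul e s = P (size s).
Proof.
elim: s => [|v s IH] //= As; have [Av As'] := allat_consE As.
by rewrite (H1p_atom _ Av) (IH As').
Qed.

Lemma part1 : injective (mpow mul e p) /\
  cond_a mul e [set a | exists n, a = mpow mul e p n] [set a | ~ divides mul p a].
Proof.
split; first exact: pow_inj.
have idp := prime_idp.
have SM1 : SM H1p by case: idp.
split => //.
- move=> a [n ->]; exists n; apply/seteqP; split => l /=.
  + move=> [eps [s [Ue As <- Ha]]].
    by rewrite (H1p_unit _ Ue) mul1 (mprod_p _ As) in Ha; apply/esym/pow_inj.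
  + move=> ->; exact: len_pow SM1 H1p_atom_p.
- exists p; split; first exact: H1p_p.
  by case: H1p_atom_p.
Qed.
End Prime.

End BFpart.
End Alg.

Theorem proposition3p2 (R : realType) (T : Type) (mul : T -> T -> T) (e : T) :
  BF_monoid mul e ->
  (* (a) holds for a cancellative prime p, with H1 the free abelian monoid on p
     and H2 = {a : p does not divide a} *)
  (forall p, is_prime mul e p -> cancellative mul p ->
     injective (mpow mul e p) /\
     cond_a mul e [set a | exists n, a = mpow mul e p n]
                  [set a | ~ divides mul p a]) /\
  (* (b) holds under accepted elasticity *)
  (accepted_elasticity mul e R -> cond_b mul e R) /\
  (* (a) and (b) imply fully elastic *)
  ((exists H1 H2, cond_a mul e H1 H2) -> cond_b mul e R -> fully_elastic mul e R) /\
  (* (a) and (b') imply fully elastic *)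
  ((exists H1 H2, cond_a mul e H1 H2 /\ cond_b' mul e H2) -> fully_elastic mul e R).
Proof.
move=> [[mulC mulA mul1 _] bf]; split; [|split; [|split]].
- by move=> p pp pc; eapply part1; eauto.
- by eapply part2; eauto.
- by eapply part3; eauto.
- by eapply part4; eauto.
Qed.
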